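(* Assume $A$ contains at least one prime element and that $U(A)$ is finite. Then every $x\in A\setminus(U(A)\cup\{0\})$ such that $\mathcal D(x)$ is finite has a prime divisor, i.e. there is a prime $p\in A$ with $p\mid x$.
   Context: Let $\mathbb F$ be a subfield of $\mathbb C$ with a norm (absolute value) $\|\cdot\|_{\mathbb F}$, and $A$ a subring of $\mathbb F$ containing $1$ (hence an integral domain). $U(A)$ is the unit group of $A$; $d\mid x$ means $x=dc$ for some $c\in A$; $\mathcal D(x)=\{d\in A:d\mid x\}$; $xU(A)=\{xu:u\in U(A)\}$. $N:A\to\mathbb F\cap\mathbb R$ is a map with $N(a)\neq0$ for all nonzero $a\in A$ and satisfying: for all $x\in A$, $N(x)\in A$, $\mathcal D(N(x))=\mathcal D(x)$ and $N(N(x))=N(x)$; for all $x,y\in A$ there is $z\in A$ with $N(x)+N(y)=N(z)$; $N(-x)=N(x)$; $N(xy)=N(x)N(y)$; $\|N(x)\|_{\mathbb F}=N(x)$; for every $x\ne0$ there is $x'\in\mathbb F\cap\mathbb R$ with $N(x)^2=xx'\in A$. An element $p\in A$ is irreducible if $p\notin U(A)\cup\{0\}$ and $\mathcal D(p)=U(A)\cup pU(A)$; it is prime if it is irreducible and $N(p)=p$. *)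

(* Defs.v *)
(* The complex numbers are modelled by an arbitrary
   numClosedFieldType C (an algebraically closed field with conjugation,
   order on the reals and norm), subsets of C by predicates C -> Prop. *)
From HB Require Import structures.
From mathcomp Require Import all_boot all_order all_algebra.
Set Implicit Arguments. Unset Strict Implicit. Unset Printing Implicit Defensive.
Import Order.TTheory GRing.Theory Num.Theory.
Local Open Scope ring_scope.

Section Defs.
Variable C : numClosedFieldType.

Definition is_subfield (F : C -> Prop) : Prop :=
  [/\ F 0, F 1, (forall x y, F x -> F y -> F (x - y)),
      (forall x y, F x -> F y -> F (x * y)) &
      (forall x, F x -> x != 0 -> F x^-1)].

Definition is_absval (F : C -> Prop) (normF : C -> C) : Prop :=
  forall x y, F x -> F y ->
    [/\ normF x \is Num.real, 0 <= normF x, (normF x = 0 <-> x = 0),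
        normF (x * y) = normF x * normF y &
        normF (x + y) <= normF x + normF y].

Definition is_subring_of (F A : C -> Prop) : Prop :=
  [/\ (forall x, A x -> F x), A 1,
      (forall x y, A x -> A y -> A (x - y)) &
      (forall x y, A x -> A y -> A (x * y))].

Variable A : C -> Prop.

Definition dvdA (d x : C) : Prop := exists c, A c /\ x = d * c.

Definition unitA (u : C) : Prop := A u /\ exists v, A v /\ u * v = 1.

Definition inD (x d : C) : Prop := A d /\ dvdA d x.

Definition finite_set (S : C -> Prop) : Prop :=
  exists s : seq C, forall y, S y -> y \in s.

Definition irreducibleA (p : C) : Prop :=
  [/\ A p, ~ unitA p, p <> 0 &
      forall d, inD p d <-> (unitA d \/ exists u, unitA u /\ d = p * u)].

Variable N : C -> C.

Definition primeA (p : C) : Prop := irreducibleA p /\ N p = p.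

Definition is_N_map (F : C -> Prop) (normF : C -> C) : Prop :=
  (forall x, A x -> F (N x) /\ N x \is Num.real) /\
  (forall a, A a -> a <> 0 -> N a <> 0) /\
  (forall x, A x -> A (N x)) /\
  (forall x d, A x -> (inD (N x) d <-> inD x d)) /\
  (forall x, A x -> N (N x) = N x) /\
  (forall x y, A x -> A y -> exists z, A z /\ N x + N y = N z) /\
  (forall x, A x -> N (- x) = N x) /\
  (forall x y, A x -> A y -> N (x * y) = N x * N y) /\
  (forall x, A x -> normF (N x) = N x) /\
  (forall x, A x -> x <> 0 -> exists x', F x' /\ x' \is Num.real /\
                                 N x ^+ 2 = x * x' /\ A (x * x')).
End Defs.

(* Main.v *)
From Stdlib Require Import Classical.
Require Import Defs.
From HB Require Import structures.
From mathcomp Require Import all_boot all_order all_algebra.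
From mathcomp Require Import zify.
Import Order.TTheory GRing.Theory Num.Theory.
Local Open Scope ring_scope.

Lemma dvd_trans_A (C : numClosedFieldType) (A : C -> Prop)
  (hAM : forall x y, A x -> A y -> A (x * y)) {a b c} :
  dvdA A a b -> dvdA A b c -> dvdA A a c.
Proof.
move=> [u [Au ->]] [v [Av ->]]; exists (u * v); split; first exact: hAM.
by rewrite mulrA.
Qed.

Lemma exists_irred (C : numClosedFieldType) (A : C -> Prop) (hA1 : A 1)
  (hAM : forall x y, A x -> A y -> A (x * y)) :
  forall n d (s : seq C), A d -> ~ unitA A d -> d <> 0 ->
  (forall y, inD A d y -> y \in s) -> (size s <= n)%N ->
  exists q, irreducibleA A q /\ dvdA A q d.
Proof.
elim=> [|n IH] d s Ad nud nz cov.
  rewrite leqn0 => /nilP s0.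
  have : d \in s by apply: cov; split=> //; exists 1; rewrite mulr1.
  by rewrite s0.
move=> hs.
have dd : dvdA A d d by exists 1; split=> //; rewrite mulr1.
case: (classic (irreducibleA A d)) => [Id|nId]; first by exists d.
have rev : forall e, (unitA A e \/ exists u, unitA A u /\ e = d * u) -> inD A d e.
  move=> e [[Ae [v [Av ev]]]|[u [[Au [v [Av uv]]] ->]]].
    split=> //; exists (v * d); split; first exact: hAM.
    by rewrite mulrA ev mul1r.
  split; first exact: hAM.
  by exists v; split=> //; rewrite -mulrA uv mulr1.
have [e [[Ae de] [nue nas]]] : exists e, inD A d e /\ ~ unitA A e /\
    ~ (exists u, unitA A u /\ e = d * u).
  apply: NNPP => H; apply: nId; split=> // d'; split; last exact: rev.
  move=> h; apply: NNPP => h2; apply: H; exists d'; split=> //.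
  by split=> h3; apply: h2; [left|right].
have ez : e <> 0.
  by move=> e0; case: de => c [_ dc]; apply: nz; rewrite dc e0 mul0r.
have dnot : ~ inD A e d.
  move=> [_ [c' [Ac' ec']]]; case: de => c [Ac dc].
  apply: nas; exists c'; split=> //; split=> //; exists c; split=> //.
  apply: (mulfI (x:=d)); first by apply/eqP.
  by rewrite mulr1 mulrA -ec' -dc.
have [q [Iq qe]] : exists q, irreducibleA A q /\ dvdA A q e.
  apply: (IH e (filter (predC1 d) s)) => //.
    move=> y [Ay ye]; rewrite mem_filter /=; apply/andP; split.
      by apply/eqP=> yd; apply: dnot; rewrite -yd.
    by apply: cov; split=> //; exact: (@dvd_trans_A _ _ hAM _ _ _ ye de).
  have ds : d \in s by apply: cov; split=> //.
  rewrite size_filter; move: hs; rewrite -(count_predC (pred1 d) s).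
  have : (0 < count (pred1 d) s)%N by rewrite -has_count has_pred1.
  have -> : count (predC (pred1 d)) s = count (predC1 d) s.
    by apply: eq_count => y.
  lia.
exists q; split=> //; exact: (@dvd_trans_A _ _ hAM _ _ _ qe de).
Qed.

Theorem mainTheorem8 (C : numClosedFieldType) (F : C -> Prop) (normF : C -> C)
    (A : C -> Prop) (N : C -> C)
    (hF : is_subfield F) (hnorm : is_absval F normF) (hA : is_subring_of F A)
    (hN : is_N_map A N F normF)
    (hprime : exists p, primeA A N p)
    (hU : finite_set (unitA A)) :
  forall x, A x -> ~ unitA A x -> x <> 0 -> finite_set (inD A x) ->
    exists p, primeA A N p /\ dvdA A p x.
Proof.
case: hA => _ hA1 _ hAM.
case: hN => _ [_ [hAN [hD [hNN _]]]].
move=> x Ax nux nz [s cov].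
have [q [[Aq nuq qz Iq] qx]] := @exists_irred _ _ hA1 hAM _ _ _ Ax nux nz cov (leqnn _).
have ANq := hAN q Aq.
have qNq : inD A (N q) q by apply/hD=> //; split=> //; exists 1; rewrite mulr1.
have NqD : inD A q (N q) by apply/(hD q)=> //; split=> //; exists 1; rewrite mulr1.
have nuNq : ~ unitA A (N q).
  move=> [_ [v [Av Nv]]]; apply: nuq; case: qNq => _ [c [Ac Nc]].
  split=> //; exists (c * v); split; first exact: hAM.
  by rewrite mulrA -Nc.
have [u [[Au [v [Av uv]]] Nqu]] : exists u, unitA A u /\ N q = q * u.
  by case: (proj1 (Iq (N q)) NqD) => // h; case: nuNq.
exists (N q); split; last first.
  case: qx => c [Ac ->]; exists (v * c); split; first exact: hAM.
  by rewrite Nqu -mulrA (mulrA u) uv mul1r.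
split; last exact: hNN.
split=> //.
  move=> Nq0; move: Nqu; rewrite Nq0 => /esym/eqP; rewrite mulf_eq0 => /orP[/eqP//|/eqP u0].
  by move: uv; rewrite u0 mul0r => /eqP; rewrite eq_sym oner_eq0.
move=> d; split.
  move=> /(hD q d Aq) /Iq [ud|[w [[Aw [w' [Aw' ww']]] dw]]]; first by left.
  right; exists (v * w); split.
    split; first exact: hAM.
    exists (w' * u); split; first exact: hAM.
    by rewrite mulrA -(mulrA v) ww' mulr1 mulrC uv.
  by rewrite dw Nqu -mulrA (mulrA u) uv mul1r.
move=> H; apply/(hD q d Aq); apply/Iq; case: H => [ud|[w [[Aw [w' [Aw' ww']]] dw]]]; first by left.
right; exists (u * w); split.
  split; first exact: hAM.
  exists (w' * v); split; first exact: hAM.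
  by rewrite mulrA -(mulrA u) ww' mulr1 uv.
by rewrite dw Nqu mulrA.
Qed.
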